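(* Let $f(y_1,\dots,y_k,z_1,\dots,z_l)\in\mathbb{R}\langle Y;Z\rangle$ be a multilinear $*$-polynomial, and let $M_n(\mathbb{R})$ be endowed with the transpose involution. Let \[ g(y_1,\dots,y_{k+2l})=f(y_1,\dots,y_k,[y_{k+1},y_{k+2}],\dots,[y_{k+2l-1},y_{k+2l}]). \] Then the image of $f$ on $M_n(\mathbb{R})$, i.e. $\{f(a_1,\dots,a_k,b_1,\dots,b_l): a_i \text{ symmetric}, b_j \text{ skew-symmetric}\}$, equals the image of $g$ evaluated on symmetric matrices, i.e. $\{g(c_1,\dots,c_{k+2l}): c_i\in M_n(\mathbb{R}) \text{ symmetric}\}$.
   Context: $\mathbb{R}\langle Y;Z\rangle$ is the free associative algebra over $\mathbb{R}$ on symmetric variables $Y=\{y_1,y_2,\dots\}$ and skew-symmetric variables $Z=\{z_1,z_2,\dots\}$; $[u,v]=uv-vu$. A multilinear polynomial is one in which each variable occurs exactly once in every monomial. *)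

(* Defs.v *)
From HB Require Import structures.
From mathcomp Require Import all_boot all_order all_algebra all_fingroup.
From mathcomp Require Import reals.
Set Implicit Arguments. Unset Strict Implicit. Unset Printing Implicit Defensive.
Import Order.TTheory GRing.Theory Num.Theory.
Local Open Scope ring_scope.

(* A multilinear polynomial in the m noncommuting variables x_0,...,x_{m-1}
   is a linear combination of the monomials x_{s 0} x_{s 1} ... x_{s (m-1)},
   s a permutation of 'I_m: we represent it by its coefficient function. *)
Definition mlpoly (R : nzRingType) (m : nat) := {ffun 'S_m -> R}.

Definition mxprod (R : nzRingType) (n m : nat) (F : 'I_m -> 'M[R]_n) : 'M[R]_n :=
  \big[@mulmx R n n n / 1%:M]_(i < m) F i.

Definition mleval (R : nzRingType) (n m : nat) (f : mlpoly R m)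
    (x : 'I_m -> 'M[R]_n) : 'M[R]_n :=
  \sum_(s : 'S_m) f s *: mxprod (fun i => x (s i)).

(* Assignment of the first k variables (y's) and the last l variables (z's). *)
Definition join_vars (T : Type) (k l : nat) (a : 'I_k -> T) (b : 'I_l -> T)
    (i : 'I_(k + l)) : T :=
  match split i with inl j => a j | inr j => b j end.

Definition mxsym (R : nzRingType) (n : nat) (A : 'M[R]_n) : Prop := A^T = A.
Definition mxskew (R : nzRingType) (n : nat) (A : 'M[R]_n) : Prop := A^T = - A.

Definition mxcomm (R : nzRingType) (n : nat) (A B : 'M[R]_n) : 'M[R]_n :=
  A *m B - B *m A.

(* Main.v *)
Require Import Defs.
From HB Require Import structures.
From mathcomp Require Import all_boot all_order all_algebra all_fingroup.
From mathcomp Require Import reals.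
From Stdlib Require Import FunctionalExtensionality.
From mathcomp Require Import ring lra.
Import Order.TTheory GRing.Theory Num.Theory.
Local Open Scope ring_scope.

Lemma comm_sym_skew (R : realType) n (A B : 'M[R]_n) :
  mxsym A -> mxsym B -> mxskew (mxcomm A B).
Proof.
rewrite /mxsym /mxskew /mxcomm => hA hB.
by rewrite linearB /= !trmx_mul hA hB opprB.
Qed.

Definition skewC (R : realType) n (B : 'M[R]_n) : 'M[R]_n :=
  \matrix_(i, j) (if i == j then 0 else B i j / ((j : nat)%:R - (i : nat)%:R)).
Definition diagD (R : realType) n : 'M[R]_n := diag_mx (\row_(i < n) (i : nat)%:R).

Lemma skew_comm (R : realType) n (B : 'M[R]_n) :
  mxskew B -> mxsym (@skewC R n B) /\ mxcomm (@skewC R n B) (diagD R n) = B.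
Proof.
rewrite /mxskew /mxsym /mxcomm => hB.
have hBij : forall i j, B j i = - B i j.
  by move=> i j; have := congr1 (fun M : 'M[R]_n => M i j) hB; rewrite !mxE.
split.
  apply/matrixP => i j; rewrite !mxE eq_sym.
  case: eqP => // /eqP hij.
  by rewrite hBij -[(i : nat)%:R - _]opprB invrN mulrN mulNr opprK.
apply/matrixP => i j; rewrite /diagD mul_mx_diag mul_diag_mx !mxE.
case: eqP => [->|/eqP hij].
  have := hBij j j; move=> h.
  have -> : B j j = 0 by lra.
  by rewrite mul0r mulr0 subr0.
have hne : (j : nat)%:R - (i : nat)%:R != 0 :> R.
  rewrite subr_eq0 eqr_nat; apply/negP => /eqP h; apply/negP: hij.
  by rewrite negbK; apply/eqP/val_inj.
by field.
Qed.

Theorem mainTheorem5 (R : realType) (n k l : nat) (f : mlpoly R (k + l))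
    (M : 'M[R]_n) :
  (exists (a : 'I_k -> 'M[R]_n) (b : 'I_l -> 'M[R]_n),
      (forall i, mxsym (a i)) /\ (forall j, mxskew (b j)) /\
      M = mleval f (join_vars a b))
  <->
  (exists (c : 'I_k -> 'M[R]_n) (d e : 'I_l -> 'M[R]_n),
      (forall i, mxsym (c i)) /\ (forall j, mxsym (d j)) /\
      (forall j, mxsym (e j)) /\
      M = mleval f (join_vars c (fun j => mxcomm (d j) (e j)))).
Proof.
split.
  move=> [a [b [ha [hb ->]]]].
  exists a, (fun j => @skewC R n (b j)), (fun _ => diagD R n).
  split => //; split; first by move=> j; case: (@skew_comm R n (b j) (hb j)).
  split.
    move=> _; rewrite /mxsym /diagD; apply/matrixP => i j; rewrite !mxE.
    by case: eqP => [->|]; rewrite ?eqxx // eq_sym; case: eqP.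
  congr (mleval f (join_vars a _)).
  by apply: functional_extensionality => j; case: (@skew_comm R n (b j) (hb j)).
move=> [c [d [e [hc [hd [he ->]]]]]].
exists c, (fun j => mxcomm (d j) (e j)); split => //; split => //.
by move=> j; apply: comm_sym_skew.
Qed.
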